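(* Let $k\ge 4$ and let $w$ be a minimal uncompletable word for $S_k$. Let $p$ be an occurrence of $v=b^{k-1}a$ and $q$ an occurrence of $u=ba^{k-1}$ in $w$ that are consecutive ($p$ before $q$), with sets of forbidden local positions $F_p$ and $F_q$. If $F_q=\{0,i,i+1,\dots,k-1\}$ for some $1\le i\le k-1$ and $|F_p|=|F_q|$, then the occurrences $p$ and $q$ overlap and $F_p=\{0,i-1,i,\dots,k-2\}$.
   Context: $\Sigma=\{a,b\}$. $S_k=\left(\Sigma^k\setminus\{ba^{k-1},b^{k-1}a\}\right)\cup\left(\Sigma^{k-1}\setminus\{a^{k-1},b^{k-1}\}\right)$, $u=ba^{k-1}$, $v=b^{k-1}a$. $\mathit{Fact}(S^* )$ and $\mathit{Pref}(S^* )$ are the sets of factors and of prefixes of words in $S^*$. A word $w\notin\mathit{Fact}(S_k^* )$ is uncompletable; a minimal uncompletable word is one of minimal length. For $w=w_1\cdots w_n$, $w[i..j]=w_i\cdots w_j$ (empty if $i>j$). A position $j$, $0\le j\le n-1$, is forbidden in $w$ if $w[j+1..n]\notin\mathit{Pref}(S_k^* )$. An occurrence of $p\in\{u,v\}$ in $w$ is an index $s$ with $w[s+1..s+k]=p$; local position $i\in\{0,\dots,k-1\}$ is the position $s+i$ of $w$, and it is forbidden in the occurrence if $s+i$ is forbidden in $w$. Two occurrences of words from $\{u,v\}$ starting at $s<t$ overlap if $t<s+k$; they are consecutive if either they overlap or they are the only occurrences of $u$ or $v$ lying inside the factor $w[s+1..t+k]$. *)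

(* Defs.v *)
From mathcomp Require Import all_boot.
Set Implicit Arguments. Unset Strict Implicit. Unset Printing Implicit Defensive.

Definition la : bool := false.
Definition lb : bool := true.
Definition word := seq bool.

Definition uw (k : nat) : word := lb :: nseq k.-1 la.
Definition vw (k : nat) : word := rcons (nseq k.-1 lb) la.

Definition inS (k : nat) (x : word) : bool :=
  ((size x == k) && (x != uw k) && (x != vw k))
  || ((size x == k.-1) && (x != nseq k.-1 la) && (x != nseq k.-1 lb)).

Definition inStar (k : nat) (x : word) : Prop :=
  exists l : seq word, all (inS k) l /\ flatten l = x.

Definition inFact (k : nat) (w : word) : Prop :=
  exists x y : word, inStar k (x ++ w ++ y).

Definition inPref (k : nat) (w : word) : Prop :=
  exists y : word, inStar k (w ++ y).

Definition uncompletable (k : nat) (w : word) : Prop := ~ inFact k w.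

Definition min_uncompletable (k : nat) (w : word) : Prop :=
  uncompletable k w /\ forall w' : word, uncompletable k w' -> size w <= size w'.

(* position j (0 <= j <= n-1) is forbidden in w if w[j+1..n] notin Pref(S^* ) *)
Definition forbidden (k : nat) (w : word) (j : nat) : Prop :=
  j < size w /\ ~ inPref k (drop j w).

(* occurrence of p at index s: w[s+1..s+|p|] = p *)
Definition occ (w p : word) (s : nat) : Prop :=
  s + size p <= size w /\ take (size p) (drop s w) = p.

Definition occ_uv (k : nat) (w : word) (r : nat) : Prop :=
  occ w (uw k) r \/ occ w (vw k) r.

Definition overlap (k s t : nat) : Prop := s < t /\ t < s + k.

Definition consecutive (k : nat) (w : word) (s t : nat) : Prop :=
  s < t /\
  (overlap k s t \/
   forall r, s <= r -> r + k <= t + k -> occ_uv k w r -> r = s \/ r = t).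

(* Main.v *)
From Stdlib Require Import Lia ClassicalEpsilon.
Require Import Defs.
From mathcomp Require Import all_boot.
Set Implicit Arguments. Unset Strict Implicit. Unset Printing Implicit Defensive.

Ltac slia := 
  repeat match goal with
  | H : context [@size (Equality.sort ?e) ?x] |- _ => change (@size (Equality.sort e) x) with (@size bool x) in H
  | |- context [@size (Equality.sort ?e) ?x] => change (@size (Equality.sort e) x) with (@size bool x)
  end;
  repeat match goal with
  | H : is_true (leq _ _) |- _ => move/leP: H => H
  | H : is_true (_ == _) |- _ => move/eqP: H => H
  | H : is_true (~~ (_ == _)) |- _ => move/eqP: H => H
  end;
  repeat match goal with
  | |- is_true (leq _ _) => apply/leP
  | |- is_true (_ == _) => apply/eqP
  | |- is_true (~~ (_ == _)) => apply/eqP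
  end;
  repeat match goal with
  | H : context [Nat.pred _] |- _ => rewrite -subn1 in H
  | |- context [Nat.pred _] => rewrite -subn1
  | H : context [addn _ _] |- _ => rewrite -plusE in H
  | H : context [subn _ _] |- _ => rewrite -minusE in H
  | H : context [muln _ _] |- _ => rewrite -multE in H
  | |- context [addn _ _] => rewrite -plusE
  | |- context [subn _ _] => rewrite -minusE
  | |- context [muln _ _] => rewrite -multE
  end; lia.

Definition pb (P : Prop) : bool := if excluded_middle_informative P then true else false.
Lemma pbP P : reflect P (pb P).
Proof. rewrite /pb; case: excluded_middle_informative => H; by constructor. Qed.

Lemma inStar_cons k e y : inS k e -> inStar k y -> inStar k (e ++ y).
Proof. move=> He [l [Hl Hf]]; exists (e :: l); by rewrite /= He Hl Hf. Qed.

Lemma pref_step k w j L : j + L <= size w -> inS k (take L (drop j w)) ->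
  inPref k (drop (j + L) w) -> inPref k (drop j w).
Proof.
move=> _ HS [y Hy]; exists y.
rewrite -(cat_take_drop L (drop j w)) drop_drop addnC -catA.
exact: inStar_cons.
Qed.

Lemma cat_split (e a b c : word) : e ++ a = b ++ c -> size e <= size b ->
  e = take (size e) b /\ a = drop (size e) b ++ c.
Proof.
elim: e b => [|x e IH] b H Hs; first by rewrite take0 drop0.
case: b H Hs => [|y b] //= [-> H]; rewrite ltnS => Hs.
by case: (IH _ H Hs) => <- <-.
Qed.

Lemma inS_size k x : inS k x -> size x = k \/ size x = k.-1.
Proof. by case/orP => /andP [/andP [/eqP -> _] _]; [left|right]. Qed.

Lemma pref_inv k w j : 2 <= k -> j + k <= size w -> inPref k (drop j w) ->
  (inS k (take k (drop j w)) /\ inPref k (drop (j + k) w)) \/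
  (inS k (take k.-1 (drop j w)) /\ inPref k (drop (j + k.-1) w)).
Proof.
move=> k2 Hjk [y [[|e l] [Hl Hf]]].
  move: Hf => /= /(congr1 size); rewrite size_cat size_drop /= => Hf; slia.
move: Hl => /= /andP [He Hl].
move: Hf => /= Hf.
have Hse : size e <= size (drop j w).
  rewrite size_drop; case: (inS_size He) => ->; slia.
case: (cat_split Hf Hse) => Hte Hdr.
have G : inS k (take (size e) (drop j w)) /\ inPref k (drop (j + size e) w).
  rewrite -Hte; split => //; exists y; rewrite addnC -drop_drop -Hdr; by exists l.
by case: (inS_size He) => Hsz; rewrite Hsz in G; [left|right].
Qed.

Lemma inS_size_pos k x : 2 <= k -> inS k x -> 0 < size x.
Proof. move=> k2 H; case: (inS_size H) => ->; slia. Qed.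

Lemma fact_split k l : 2 <= k -> all (inS k) l -> forall y x z,
  flatten l = y ++ x ++ z -> k <= size x -> exists2 j, j < k & inPref k (drop j x).
Proof.
move=> k2; elim: l => [|e l IH] Hl y x z Hf Hx.
  move: Hf => /(congr1 size) /=; rewrite !size_cat => H; slia.
move: Hl => /= /andP [He Hl]; move: Hf => /= Hf.
case: y Hf => [|c y] Hf.
  exists 0; first slia. exists z; rewrite drop0; exists (e :: l); by rewrite /= He Hl Hf.
case: (leqP (size e) (size (c :: y))) => Hsz.
  case: (cat_split Hf Hsz) => _ Hf'; exact: (IH Hl _ _ _ Hf' Hx).
have Hsz' : size (c :: y) <= size e by slia.
case: (cat_split (esym Hf) Hsz') => _ Hd.
set d := drop (size (c :: y)) e in Hd.
have Hdsz : size d <= size x.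
  rewrite size_drop; case: (inS_size He) => ->; slia.
case: (cat_split (esym Hd) Hdsz) => _ Hfl.
exists (size d).
  rewrite size_drop /=; case: (inS_size He) => ->; slia.
exists z; exists l; by rewrite Hl -Hfl.
Qed.

Lemma min_no_window k w r : 2 <= k -> min_uncompletable k w -> 1 <= r -> r + k <= size w ->
  (forall m, m < k -> ~ inPref k (drop (r + m) w)) -> False.
Proof.
move=> k2 [_ Hm] Hr Hrk Hf.
have Hu : uncompletable k (drop r w).
  move=> [y [z [l [Hl Hfl]]]].
  have Hx : k <= size (drop r w) by rewrite size_drop; slia.
  case: (fact_split k2 Hl Hfl Hx) => j Hj.
  rewrite drop_drop addnC; exact: Hf.
have := Hm _ Hu; rewrite size_drop => H; slia.
Qed.

Lemma sum_recl K (f : nat -> nat) : 0 < K ->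
  \sum_(m < K) f m = f 0 + \sum_(m < K.-1) f m.+1.
Proof. case: K => // K _; rewrite big_ord_recl /=; congr (_ + _). Qed.

Lemma sum_recr K (f : nat -> nat) : 0 < K ->
  \sum_(m < K) f m = \sum_(m < K.-1) f m + f K.-1.
Proof. case: K => // K _; by rewrite big_ord_recr. Qed.

Lemma win_shift K (f : nat -> nat) j : 0 < K ->
  \sum_(m < K) f (j + m) + f (j + K) = f j + \sum_(m < K) f (j.+1 + m).
Proof.
move=> HK; rewrite (sum_recl (fun m => f (j + m))) // (sum_recr (fun m => f (j.+1 + m))) //.
rewrite addn0 -addnA; congr (_ + _).
have -> : j.+1 + K.-1 = j + K by slia.
congr (_ + _); apply: eq_bigr => m _; by rewrite addnS addSn.
Qed.

Lemma sum_ones K : \sum_(m < K) 1 = K.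
Proof. by rewrite sum1_card card_ord. Qed.

Lemma sum_strict K (f g : nat -> nat) m0 : (forall m, m < K -> f m <= g m) ->
  m0 < K -> f m0 < g m0 -> \sum_(m < K) f m < \sum_(m < K) g m.
Proof.
move=> Hle Hm0 Hlt.
rewrite (bigD1 (Ordinal Hm0)) //= [X in _ < X](bigD1 (Ordinal Hm0)) //=.
have H2 : \sum_(i < K | i != Ordinal Hm0) f i <= \sum_(i < K | i != Ordinal Hm0) g i.
  apply: leq_sum => m _; exact: Hle.
move: H2 Hlt; set a := \sum_(i < K | _) f i; set b := \sum_(i < K | _) g i => H2 Hlt; slia.
Qed.

Lemma card_sum K (A : {set 'I_K}) (f : nat -> bool) :
  (forall j : 'I_K, (j \in A) = ~~ f j) -> #|A| + \sum_(j < K) (f j : nat) = K.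
Proof.
move=> H; rewrite -sum1_card big_mkcond /= -big_split /=.
rewrite -[RHS]sum_ones; apply: eq_bigr => j _; rewrite H; by case: (f j).
Qed.

Lemma nth_td w j L m : m < L -> nth false (take L (drop j w)) m = nth false w (j + m).
Proof. move=> H; by rewrite nth_take // nth_drop. Qed.

Lemma td_eq w j L c : j + L <= size w -> size c = L ->
  (forall m, m < L -> nth false w (j + m) = nth false c m) -> take L (drop j w) = c.
Proof.
move=> Hs Hc H; apply: (@eq_from_nth _ false).
  rewrite size_takel ?Hc // size_drop; slia.
move=> m; rewrite size_takel ?size_drop; last slia.
move=> Hm; rewrite nth_td //; exact: H.
Qed.

Lemma occ_nth w p s : occ w p s -> forall m, m < size p -> nth false w (s + m) = nth false p m.
Proof. case=> _ H m Hm; by rewrite -H nth_td. Qed.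

Lemma nth_uw k m : m < k -> nth false (uw k) m = (m == 0).
Proof. case: m => //= m Hm; rewrite nth_nseq; by case: ifP. Qed.

Lemma nth_vw k m : m < k -> nth false (vw k) m = (m < k.-1).
Proof.
move=> Hm; rewrite /vw nth_rcons size_nseq nth_nseq.
case: ifP => H; first by rewrite H. by case: ifP.
Qed.

Lemma inS_k k x : size x = k -> x != uw k -> x != vw k -> inS k x.
Proof. move=> Hs Hu Hv; by rewrite /inS Hs eqxx Hu Hv. Qed.

Lemma inS_k1 k x : size x = k.-1 -> x != nseq k.-1 la -> x != nseq k.-1 lb -> inS k x.
Proof. move=> Hs Ha Hb; by rewrite /inS Hs eqxx Ha Hb orbT. Qed.

Lemma neq_nseq x L c m : m < L -> nth false x m != c -> x != nseq L c.
Proof. move=> Hm H; apply/eqP => E; move: H; by rewrite E nth_nseq Hm eqxx. Qed.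

Lemma notS_v k : 1 <= k -> ~~ inS k (vw k).
Proof.
move=> Hk; rewrite /inS eqxx /= andbF /= size_rcons size_nseq.
have -> : (k.-1.+1 == k.-1) = false by apply/negbTE; slia.
done.
Qed.

Lemma notS_bb k : 1 <= k -> ~~ inS k (nseq k.-1 lb).
Proof.
move=> Hk; rewrite /inS eqxx /= andbF orbF size_nseq.
have -> : (k.-1 == k) = false by apply/negbTE; slia.
done.
Qed.

Theorem lemma6 (k : nat) (w : word) (s t i : nat) (Fp Fq : {set 'I_k}) :
  4 <= k ->
  min_uncompletable k w ->
  occ w (vw k) s ->
  occ w (uw k) t ->
  consecutive k w s t ->
  (forall j : 'I_k, j \in Fp <-> forbidden k w (s + j)) ->
  (forall j : 'I_k, j \in Fq <-> forbidden k w (t + j)) ->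
  1 <= i <= k.-1 ->
  Fq = [set j : 'I_k | (val j == 0) || (i <= val j)] ->
  #|Fp| = #|Fq| ->
  overlap k s t /\
  Fp = [set j : 'I_k | (val j == 0) || (i.-1 <= val j <= k - 2)].
Proof.
move=> k4 Hmin Hp Hq Hcons HFp HFq /andP [Hi1 Hik] HFqdef Hcard.
have k2 : 2 <= k by slia.
have szu : size (uw k) = k by rewrite /uw /= size_nseq; slia.
have szv : size (vw k) = k by rewrite /vw size_rcons size_nseq; slia.
have Hsk : s + k <= size w by case: Hp; rewrite szv.
have Htk : t + k <= size w by case: Hq; rewrite szu.
have Lv : forall m, m < k -> nth false w (s + m) = (m < k.-1).
  move=> m Hm; by rewrite (occ_nth Hp) ?szv // nth_vw.
have Lu : forall m, m < k -> nth false w (t + m) = (m == 0).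
  move=> m Hm; by rewrite (occ_nth Hq) ?szu // nth_uw.
case: Hcons => Hst Hcons.
pose Nb j := pb (inPref k (drop j w)).
have NbP : forall j, reflect (inPref k (drop j w)) (Nb j) := fun j => pbP _.
have HNt : forall x, x < k -> Nb (t + x) = (x != 0) && (x < i).
  move=> x Hx; have := HFq (Ordinal Hx); rewrite HFqdef inE /= /forbidden => H.
  rewrite [x < i]ltnNge -negb_or.
  move: H; case: ((x == 0) || (i <= x)) => H; case: NbP => Hn //=.
    by case: (H.1 erefl).
  have : false by apply: H.2; split => //; slia.
  done.
have HNs : forall j : 'I_k, (j \in Fp) = ~~ Nb (s + j).
  move=> j; have := HFp j; rewrite /forbidden.
  case: (j \in Fp) => H; case: NbP => Hn //=.
    by case: (H.1 erefl).
  have : false by apply: H.2; split => //; have Hj := ltn_ord j; slia.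
  done.
pose cnt j := \sum_(m < k) (Nb (j + m) : nat).
have Hcnt : cnt s = cnt t.
  have E1 := @card_sum _ _ (fun m => Nb (s + m)) HNs.
  have E2 : #|Fq| + cnt t = k.
    apply: (@card_sum _ _ (fun m => Nb (t + m))) => j.
    rewrite HFqdef inE /= HNt // negb_and negbK -leqNgt; done.
  rewrite -/(cnt s) in E1; move: E1 E2; rewrite Hcard => E1 E2; slia.
have Hi2 : 2 <= i.
  case: (leqP 2 i) => // Hi; exfalso.
  have Hs1 : 1 <= t by slia.
  apply: (min_no_window k2 Hmin Hs1 Htk) => m Hm Hp'.
  have := HNt m Hm; rewrite (introT (NbP _) Hp') => /esym /andP [H1 H2]; slia.
have Hs0 : Nb s = false.
  apply/negbTE/NbP => H.
  case: (pref_inv k2 Hsk H) => [[HS _]|[HS _]].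
    have Hk1 : 1 <= k by slia.
    move: HS; case: Hp => _; rewrite szv => ->; by rewrite (negbTE (notS_v Hk1)).
  have E : take k.-1 (drop s w) = nseq k.-1 lb.
    apply: td_eq; [slia | by rewrite size_nseq |] => m Hm.
    rewrite Lv ?nth_nseq ?Hm //; slia.
  have Hk1 : 1 <= k by slia.
  move: HS; by rewrite E (negbTE (notS_bb Hk1)).
have spread : forall j, j + k.-1 <= size w -> inS k (take k.-1 (drop j w)) ->
    Nb (j + k.-1) -> Nb j.
  move=> j H1 H2 /NbP H3; apply/NbP; exact: pref_step H2 H3.
have stepk : forall j, j + k <= size w -> inS k (take k (drop j w)) -> Nb (j + k) -> Nb j.
  move=> j H1 H2 /NbP H3; apply/NbP; exact: pref_step H2 H3.
have inv : forall j, j + k <= size w -> Nb j -> Nb (j + k) || Nb (j + k.-1).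
  move=> j H1 /NbP H2; case: (pref_inv k2 H1 H2) => [[_ /NbP ->]|[_ /NbP ->]] //.
  by rewrite orbT.
have Sfac : forall m, 1 <= m <= k - 2 -> s + m + k.-1 <= size w ->
    inS k (take k.-1 (drop (s + m) w)).
  move=> m /andP [Hm1 Hm2] Hsz; apply: inS_k1.
  - rewrite size_takel // size_drop; slia.
  - apply: (@neq_nseq _ _ _ 0); first slia.
    rewrite nth_td; last slia. rewrite addn0 Lv; last slia.
    have -> : m < k.-1 by slia. done.
  - apply: (@neq_nseq _ _ _ (k.-1 - m)); first slia.
    rewrite nth_td; last slia.
    have -> : s + m + (k.-1 - m) = s + k.-1 by slia.
    rewrite Lv; last slia. by rewrite ltnn.
case: (ltnP t (s + k)) => Hov.
-
  have Hd : t = s + (t - s) by slia.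
  have A1 : t - s < k.-1.
    have E1 := Lu 0 ltac:(slia). have E2 := Lv (t - s) ltac:(slia).
    rewrite addn0 in E1; rewrite -Hd E1 in E2; by rewrite -E2.
  have A2 : ~~ ((t - s).+1 < k.-1).
    have E3 := Lu 1 ltac:(slia). have E4 := Lv (t - s).+1 ltac:(slia).
    have E5 : s + (t - s).+1 = t + 1 by slia.
    rewrite E5 E3 in E4; by rewrite -E4.
  rewrite -leqNgt in A2.
  have Ht : t = s + (k - 2) by slia.
  split; first by split.
  apply/setP => j; rewrite inE HNs.
  have Hj := ltn_ord j.
  change (\val j) with (nat_of_ord j).
  move: (nat_of_ord j) Hj => m Hm.
  case: (m =P 0) => [->|Hm0]; first by rewrite addn0 Hs0.
  case: (m =P k.-1) => [->|Hmk1].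
    have -> : s + k.-1 = t + 1 by slia.
    rewrite HNt; last slia.
    have -> : 1 < i by slia.
    have -> : k.-1 <= k - 2 = false by apply/negbTE; rewrite -ltnNge; slia.
    by rewrite andbF /=.
  case: (m =P k - 2) => [->|Hmk2].
    rewrite -Ht -[t]addn0 HNt; last slia.
    rewrite /= leqnn andbT.
    have -> : i.-1 <= k - 2 by slia.
    by [].
  have HNm : Nb (s + m) = (m.+1 < i).
    apply/idP/idP.
    + move=> H; have := inv (s + m) ltac:(slia) H.
      have -> : s + m + k = t + m.+2 by slia.
      have -> : s + m + k.-1 = t + m.+1 by slia.
      rewrite HNt; last slia. rewrite HNt; last slia.
      case/orP => /andP [_ H']; slia.
    + move=> H; apply: spread; first slia.
        apply: Sfac; [apply/andP; split; slia | slia].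
      have -> : s + m + k.-1 = t + m.+1 by slia.
      rewrite HNt; last slia. by rewrite /= H.
  have Hm0' : (m == 0) = false by apply/negbTE; slia.
  have Hmk : m <= k - 2 by slia.
  rewrite HNm Hmk andbT /= -leqNgt.
  apply/idP/idP => H; slia.
-
  exfalso.
  have Honly : forall r, s <= r -> r + k <= t + k -> occ_uv k w r -> r = s \/ r = t.
    case: Hcons => // [[_ H]]; exfalso; slia.
  have notocc : forall r, s < r -> r < t -> ~ occ_uv k w r.
    move=> r H1 H2 H; case: (Honly r ltac:(slia) ltac:(slia) H) => E; slia.
  have Sk : forall r, s < r -> r < t -> inS k (take k (drop r w)).
    move=> r H1 H2; apply: inS_k.
    - rewrite size_takel // size_drop; slia.
    - apply/eqP => E; apply: (notocc r H1 H2); left; split; [rewrite szu; slia | by rewrite szu].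
    - apply/eqP => E; apply: (notocc r H1 H2); right; split; [rewrite szv; slia | by rewrite szv].
  have Sfac2 : forall m, 1 <= m <= k.-1 -> inS k (take k.-1 (drop (s + m) w)).
    move=> m /andP [Hm1 Hm2].
    case: (ltnP m k.-1) => Hmk.
      apply: Sfac; [apply/andP; split; slia | slia].
    have Em : m = k.-1 by slia.
    subst m.
    apply: inS_k1.
    - rewrite size_takel // size_drop; slia.
    - apply/eqP => E.
      apply: (notocc (s + (k - 2)) ltac:(slia) ltac:(slia)).
      left; split; first by rewrite szu; slia.
      rewrite szu; apply: td_eq; [slia | exact: szu |] => m' Hm'.
      rewrite nth_uw //. case: m' Hm' => [|m'] Hm'.
        rewrite addn0 Lv; last slia.
        have H : k - 2 < k.-1 by slia.
        by rewrite H.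
      have -> : s + (k - 2) + m'.+1 = s + k.-1 + m' by slia.
      rewrite -(@nth_td w (s + k.-1) k.-1 m'); last slia.
      rewrite E nth_nseq.
      have -> : m' < k.-1 by slia.
      done.
    - apply: (@neq_nseq _ _ _ 0); first slia.
      rewrite nth_td; last slia. rewrite addn0 Lv; last slia. by rewrite ltnn.
  have mono : forall j, s < j -> j < t -> Nb (j + k) -> Nb j.
    move=> j H1 H2; apply: stepk; [slia | exact: Sk].
  have spreadS : forall m, m < k.-1 -> Nb (s + k + m) -> Nb (s + m.+1).
    move=> m Hm H; apply: spread; first slia.
      apply: Sfac2; apply/andP; split; slia.
    have -> : s + m.+1 + k.-1 = s + k + m by slia.
    exact: H.
  have monoS : forall m, m < k.-1 -> Nb (s + k + m.+1) -> Nb (s + m.+1).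
    move=> m Hm H; apply: mono; [slia|slia|].
    have -> : s + m.+1 + k = s + k + m.+1 by slia.
    exact: H.
  have Hk0 : 0 < k by slia.
  have stepc : forall j, s < j -> j < t -> cnt j.+1 <= cnt j.
    move=> j H1 H2.
    have E : cnt j + Nb (j + k) = Nb j + cnt j.+1 := win_shift (fun m => (Nb m : nat)) j Hk0.
    have Hle : (Nb (j + k) : nat) <= Nb j.
      by move: (mono j H1 H2); case: (Nb (j + k)); case: (Nb j) => // /(_ isT).
    slia.
  have chain : forall a b, s < a -> a <= b -> b <= t -> cnt b <= cnt a.
    move=> a b Ha; elim: b => [|b IH] Hab Hbt; first slia.
    case: (leqP a b) => H.
      have H1 := stepc b ltac:(slia) ltac:(slia).
      have H2 := IH H ltac:(slia).
      exact: leq_trans H1 H2.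
    have -> : a = b.+1 by slia.
    done.
  have Ecs : cnt s = \sum_(m < k.-1) (Nb (s + m.+1) : nat).
    by rewrite /cnt (sum_recl (fun m => (Nb (s + m) : nat))) //= addn0 Hs0 add0n.
  have Ecsk : cnt (s + k) = Nb (s + k) + \sum_(m < k.-1) (Nb (s + k + m.+1) : nat).
    by rewrite /cnt (sum_recl (fun m => (Nb (s + k + m) : nat))) //= addn0.
  move: Ecs Ecsk.
  set A := \sum_(m < k.-1) (Nb (s + k + m.+1) : nat).
  set B := \sum_(m < k.-1) (Nb (s + m.+1) : nat).
  move=> Ecs Ecsk.
  have AleB : A <= B.
    rewrite /A /B; apply: leq_sum => m _.
    move: (monoS m (ltn_ord m)); case: (Nb (s + k + m.+1)) => //= H; by rewrite H.
  have strict : forall m0, m0 < k.-1 -> Nb (s + m0.+1) -> ~~ Nb (s + k + m0.+1) -> A < B.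
    move=> m0 Hm0 H1 H2; rewrite /A /B.
    apply: (@sum_strict _ (fun m => (Nb (s + k + m.+1) : nat)) (fun m => (Nb (s + m.+1) : nat)) m0) => //.
      move=> m Hm; move: (monoS m Hm); case: (Nb (s + k + m.+1)) => //= H; by rewrite H.
    by rewrite H1 (negbTE H2).
  have Hct : cnt t <= k - 2.
    rewrite /cnt (sum_recl (fun m => (Nb (t + m) : nat))) // (HNt 0 Hk0) /=.
    rewrite (sum_recr (fun m => (Nb (t + m.+1) : nat))); last slia.
    have -> : Nb (t + k.-1.-1.+1) = false.
      rewrite HNt; last slia.
      have -> : k.-1.-1.+1 < i = false by apply/negbTE; rewrite -leqNgt; slia.
      by rewrite andbF.
    rewrite addn0.
    have H : \sum_(m < k.-1.-1) (Nb (t + m.+1) : nat) <= \sum_(m < k.-1.-1) 1.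
      apply: leq_sum => m _; exact: leq_b1.
    rewrite sum_ones in H; slia.
  case: (leqP (s + k + (k - i)) t) => Hfar.
  +
    have [j0 Ej0] : exists j0, j0 = t - (k - i) by eexists.
    have Nbj0 : Nb j0.
      apply: spread; first slia.
      - apply: inS_k1.
        + rewrite size_takel // size_drop; slia.
        + apply: (@neq_nseq _ _ _ (k - i)); first slia.
          rewrite nth_td; last slia.
          have -> : j0 + (k - i) = t + 0 by slia.
          rewrite Lu; last slia. done.
        + apply/eqP => E.
          apply: (notocc j0 ltac:(slia) ltac:(slia)).
          right; split; first by rewrite szv; slia.
          rewrite szv; apply: td_eq; [slia | exact: szv |] => m Hm.
          rewrite nth_vw //. case: (ltnP m k.-1) => Hm'.
          * rewrite -(@nth_td w j0 k.-1 m Hm') E nth_nseq Hm'. done.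
          * have -> : m = k.-1 by slia.
            have -> : j0 + k.-1 = t + i.-1 by slia.
            rewrite Lu; last slia.
            apply/negbTE; slia.
      - have -> : j0 + k.-1 = t + i.-1 by slia.
        rewrite HNt; last slia. apply/andP; split; slia.
    have Nbj0k : Nb (j0 + k) = false.
      have -> : j0 + k = t + i by slia.
      rewrite HNt; last slia. by rewrite ltnn andbF.
    have E : cnt j0 + Nb (j0 + k) = Nb j0 + cnt j0.+1 := win_shift (fun m => (Nb m : nat)) j0 Hk0.
    rewrite Nbj0 Nbj0k /= in E.
    have C1 := chain (s + k) j0 ltac:(slia) ltac:(slia) ltac:(slia).
    have C2 := chain j0.+1 t ltac:(slia) ltac:(slia) ltac:(slia).
    have HX0 : Nb (s + k).
      move: Ecsk; case: (Nb (s + k)) => //= Ecsk; exfalso; slia.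
    rewrite HX0 /= in Ecsk.
    have AeqB : A = B by slia.
    have allX : forall m, m < k -> Nb (s + k + m).
      elim => [|m IH] Hm; first by rewrite addn0.
      case Hb : (Nb (s + k + m.+1)) => //.
      have := strict m ltac:(slia) (spreadS m ltac:(slia) (IH ltac:(slia))) (negbT Hb).
      move=> H; exfalso; slia.
    have HA : A = k.-1.
      rewrite /A -[RHS]sum_ones; apply: eq_bigr => m _.
      rewrite allX //; have Hm := ltn_ord m; slia.
    slia.
  +
    have X0 : Nb (s + k) = false.
      case: (ltnP (s + k) t) => H.
      - apply/negbTE/negP => Hn.
        have := inv (s + k) ltac:(slia) Hn.
        have -> : s + k + k = t + (s + k + k - t) by slia.
        have -> : s + k + k.-1 = t + (s + k + k.-1 - t) by slia.
        rewrite HNt; last slia. rewrite HNt; last slia.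
        case/orP => /andP [_ H']; slia.
      - have -> : s + k = t + 0 by slia.
        rewrite HNt; last slia. done.
    rewrite X0 /= in Ecsk.
    have C := chain (s + k) t ltac:(slia) ltac:(slia) ltac:(slia).
    have [m0 Em0] : exists m0, m0 = t + i - s - k - 1 by eexists.
    have HX : Nb (s + k + m0).
      have -> : s + k + m0 = t + i.-1 by slia.
      rewrite HNt; last slia. apply/andP; split; slia.
    have HnX : ~~ Nb (s + k + m0.+1).
      have -> : s + k + m0.+1 = t + i by slia.
      rewrite HNt; last slia. by rewrite ltnn andbF.
    have := strict m0 ltac:(slia) (spreadS m0 ltac:(slia) HX) HnX.
    move=> H; slia.
Qed.
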